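(* In the setting of the context, let $i,j\in\{0,\dots,m\}$ with $i\ne j$, and let $R$ be a cyclic extension of $k$ of degree $p^d$. Set $F=K_i\cap K_j\cap R$ and $p^h=[F:k]$. Suppose that $R\subseteq K_iK_j$ and $d\le\min\{\epsilon_i,\epsilon_j\}$. Then $d+e_{i,j}-h\le\min\{\epsilon_i,\epsilon_j\}$ and $R\subseteq K_i(d+e_{i,j}-h)K_j(d+e_{i,j}-h)$.
   Context: $k$ is a global field, all extensions lie in a separable closure. $p$ is a prime, $m\ge2$, $K_0,\dots,K_m$ are cyclic extensions of $k$ with $[K_i:k]=p^{\epsilon_i}$, $\epsilon_0\le\epsilon_i$ for all $i$, $\bigcap_{i=0}^mK_i=k$, and $K_j\not\subseteq K_i$ for $i\ne j$. For $0\le f\le\epsilon_i$, $K_i(f)$ is the unique subfield of $K_i$ of degree $p^f$ over $k$, and $p^{e_{i,j}}=[K_i\cap K_j:k]$. *)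

(* Defs.v *)
From HB Require Import structures.
From mathcomp Require Import all_boot all_order all_algebra all_fingroup all_solvable all_field.
Set Implicit Arguments. Unset Strict Implicit. Unset Printing Implicit Defensive.
Import GRing.Theory.
Local Open Scope ring_scope.

Definition is_number_field (F : fieldType) : Prop :=
  [pchar F] =i pred0 /\
  exists s : seq F, forall x : F,
    exists c : seq rat, x = \sum_(i < size s) ratr c`_i * s`_i.

Definition zpoly_eval (F : fieldType) (q : {poly int}) (t : F) : F :=
  (map_poly intr q).[t].

(* A global function field: characteristic p > 0, containing an element t
   transcendental over F_p, and finite-dimensional over F_p(t). *)
Definition is_function_field (F : fieldType) : Prop :=
  exists p : nat, p \in [pchar F] /\
  exists t : F,
    (forall q : {poly int}, zpoly_eval q t = 0 -> forall i, (p%:Z %| q`_i)%Z) /\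
    exists s : seq F, forall x : F,
      exists a b : seq {poly int},
        x = \sum_(i < size s) (zpoly_eval a`_i t / zpoly_eval b`_i t) * s`_i.

Definition is_global_field (F : fieldType) : Prop :=
  is_number_field F \/ is_function_field F.

Definition cyclic_ext (F0 : fieldType) (L : splittingFieldType F0)
  (E : {subfield L}) : bool :=
  galois 1%VS E && cyclic 'Gal(E / 1%VS).

(* Main.v *)
Require Import Defs.
From HB Require Import structures.
From mathcomp Require Import all_boot all_order all_algebra all_fingroup all_solvable all_field.
From mathcomp Require Import ring zify.
Set Implicit Arguments. Unset Strict Implicit. Unset Printing Implicit Defensive.
Local Open Scope ring_scope.
Local Open Scope group_scope.

Lemma pow_index (gT : finGroupType) (G T : {group gT}) z :
  T \subset G -> G \subset 'N(T)%g -> z \in G -> (z ^+ #|G : T|)%g \in T.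
Proof.
move=> sTG nTG Gz.
have Nz : z \in 'N(T)%g by apply: (subsetP nTG).
apply: coset_idr; first by rewrite groupX.
rewrite morphX //= -(card_quotient nTG).
by apply: expg_cardG; rewrite mem_quotient.
Qed.

Section Gal.
Variables (F0 : fieldType) (L : splittingFieldType F0).

Lemma card_galE (E M : {subfield L}) : galois 1 E -> (M <= E)%VS ->
  (#|'Gal(E / M)| * \dim M)%N = \dim E.
Proof.
move=> gE sME.
have gME : galois M E by apply: galoisS gE; rewrite sub1v sME.
by rewrite -(galois_dim gME); apply/esym/dim_sup_field.
Qed.

Lemma card_gal1 (E : {subfield L}) : galois 1 E -> #|'Gal(E / 1)| = \dim E.
Proof. by move=> gE; rewrite -(card_galE gE (sub1v E)) dimv1 muln1. Qed.

Lemma index_galE (E M1 M2 : {subfield L}) : galois 1 E -> (M1 <= M2)%VS ->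
  (M2 <= E)%VS -> (#|'Gal(E / M1) : 'Gal(E / M2)| * \dim M1)%N = \dim M2.
Proof.
move=> gE s12 s2E.
have s1E := subv_trans s12 s2E.
have := Lagrange (galS E s12).
have h1 := card_galE gE s1E; have h2 := card_galE gE s2E.
move=> hL; have pos : (0 < #|'Gal(E / M2)|)%N by apply: cardG_gt0.
apply/eqP; rewrite -(eqn_pmul2l pos) mulnA hL h1 h2 //.
Qed.

Lemma gal_EE (E : {subfield L}) x : x \in 'Gal(E / E)%g -> x = 1%g.
Proof.
move=> hx; apply/eqP/gal_eqP => a Ea.
by rewrite gal_id (fixed_gal (subvv E) hx Ea).
Qed.

Lemma gal_cap_sub (E M1 M2 : {subfield L}) : (M1 <= E)%VS -> (M2 <= E)%VS ->
  'Gal(E / M1) :&: 'Gal(E / M2) \subset 'Gal(E / (M1 * M2)%AS).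
Proof.
move=> s1 s2; apply/subsetP => x /setIP[x1 x2].
have s12 : ((M1 * M2)%AS <= E)%VS by apply: prodv_sub.
rewrite -sub1set galois_connection //=.
apply: prodv_sub; rewrite -galois_connection // sub1set //.
Qed.

Lemma gal_capv_sub (E M1 M2 : {subfield L}) : galois 1 E ->
  (M1 <= E)%VS -> (M2 <= E)%VS ->
  'Gal(E / M1) \subset 'N('Gal(E / M2))%g ->
  'Gal(E / (M1 :&: M2)%AS) \subset ('Gal(E / M1) * 'Gal(E / M2))%g.
Proof.
move=> gE s1 s2 nG.
rewrite -norm_joinEl //.
set J := ('Gal(E / M1) <*> 'Gal(E / M2))%G.
have g1 : galois M1 E by apply: galoisS gE; rewrite sub1v s1.
have g2 : galois M2 E by apply: galoisS gE; rewrite sub1v s2.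
have sJ : (fixedField J <= (M1 :&: M2)%AS)%VS.
  rewrite subv_cap; apply/andP; split.
    by have := fixedFieldS (joing_subl 'Gal(E / M1) 'Gal(E / M2)); rewrite (galois_fixedField g1).
  by have := fixedFieldS (joing_subr 'Gal(E / M1) 'Gal(E / M2)); rewrite (galois_fixedField g2).
by have := galS E sJ; rewrite (gal_fixedField J).
Qed.


Lemma galois_prod (M1 M2 : {subfield L}) : galois 1 M1 -> galois 1 M2 ->
  galois 1 (M1 * M2)%AS.
Proof.
move=> g1 g2; have /and3P[_ sep1 n1] := g1; have /and3P[_ sep2 n2] := g2.
rewrite /galois sub1v /=; apply/andP; split.
  apply: (separable_trans (M:=M1)) => //.
  apply: (separableSr (E:= <<M1 & vbasis M2>>%AS)).
    apply: prodv_sub; first exact: subv_adjoin_seq.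
    rewrite -{1}(span_basis (vbasisP M2)).
    apply: subv_trans (sub_agenv _); exact: addvSr.
  apply: separable_Fadjoin_seq; apply/allP => x /vbasis_mem Mx.
  apply: (separable_elementS (sub1v M1)).
  exact: (separableP sep2).
apply/forall_inP => f hf.
by rewrite aimgM (eqP (forall_inP n1 f hf)) (eqP (forall_inP n2 f hf)).
Qed.


Lemma gal_abelian (M1 M2 : {subfield L}) :
  galois 1 M1 -> galois 1 M2 -> abelian 'Gal(M1 / 1) -> abelian 'Gal(M2 / 1) ->
  abelian 'Gal((M1 * M2)%AS / 1).
Proof.
move=> g1 g2 a1 a2.
set E := (M1 * M2)%AS.
have gE : galois 1 E by apply: galois_prod.
apply/centsP => x Gx y Gy; rewrite /commute.
have key : forall M : {subfield L}, galois 1 M -> abelian 'Gal(M / 1) ->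
    (M <= E)%VS -> (x * y)^-1 * (y * x) \in 'Gal(E / M).
  move=> M gM aM sME.
  have sKME : (1 <= M <= E)%VS by rewrite sub1v.
  have nM : normalField 1 M by case/and3P: gM.
  rewrite -(normalField_ker sKME nM).
  set f := normalField_cast_morphism sKME nM.
  have Gxy : (x * y)^-1 * (y * x) \in 'Gal(E / 1).
    by apply: groupM; [rewrite groupV|]; apply: groupM.
  apply/(kerP f Gxy).
  have fx : f x \in 'Gal(M / 1).
    by move: (mem_morphim f Gx Gx); rewrite (normalField_img gE sKME nM).
  have fy : f y \in 'Gal(M / 1).
    by move: (mem_morphim f Gy Gy); rewrite (normalField_img gE sKME nM).
  have Gxy' : x * y \in 'Gal(E / 1) by apply: groupM.
  have Gyx' : y * x \in 'Gal(E / 1) by apply: groupM.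
  rewrite morphM ?groupV // morphV // !morphM //.
  by rewrite ((centsP aM) _ fx _ fy) mulVg.
have c1 := key M1 g1 a1 (field_subvMr M1 M2).
have c2 := key M2 g2 a2 (field_subvMl M1 M2).
have : (x * y)^-1 * (y * x) \in 'Gal(E / E).
  by apply: (subsetP (gal_cap_sub (field_subvMr M1 M2) (field_subvMl M1 M2))); rewrite inE c1 c2.
move/gal_EE => /eqP; rewrite -eq_mulVg1 => /eqP //.
Qed.


Lemma gal_norm (E M1 M2 : {subfield L}) : abelian 'Gal(E / 1) ->
  'Gal(E / M1) \subset 'N('Gal(E / M2)).
Proof.
move=> aG; apply: subset_trans (galS E (sub1v M1)) _.
by apply: sub_abelian_norm aG (galS E (sub1v M2)).
Qed.

Lemma arith_lemma g1 g2 gP gC d1 d2 dP dC N :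
  (0 < gP)%N -> (0 < gC)%N -> (g1 * d1 = N)%N -> (g2 * d2 = N)%N ->
  (gP * dP = N)%N -> (gC * dC = N)%N -> (g1 * g2 = gC * gP)%N ->
  (dP * dC = d1 * d2)%N.
Proof.
move=> pP pC h1 h2 hP hC hm.
have pm : (0 < gC * gP)%N by rewrite muln_gt0 pP pC.
apply/eqP; rewrite -(eqn_pmul2l pm).
apply/eqP; rewrite -{2}hm.
have -> : (gC * gP * (dP * dC))%N = (gC * dC * (gP * dP))%N by ring.
have -> : (g1 * g2 * (d1 * d2))%N = (g1 * d1 * (g2 * d2))%N by ring.
by rewrite h1 h2 hP hC.
Qed.

Lemma dim_prod_cap (E M1 M2 : {subfield L}) : galois 1 E -> abelian 'Gal(E / 1) ->
  (M1 <= E)%VS -> (M2 <= E)%VS ->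
  (\dim (M1 * M2)%AS * \dim (M1 :&: M2)%AS = \dim M1 * \dim M2)%N.
Proof.
move=> gE aG s1 s2.
have sP : ((M1 * M2)%AS <= E)%VS by apply: prodv_sub.
have sC : ((M1 :&: M2)%AS <= E)%VS by apply: subv_trans (capvSl _ _) s1.
have eq1 : 'Gal(E / (M1 * M2)%AS) = 'Gal(E / M1) :&: 'Gal(E / M2).
  apply/eqP; rewrite eqEsubset gal_cap_sub // andbT subsetI.
  by rewrite !galS // ?field_subvMr ?field_subvMl.
have eq2 : 'Gal(E / (M1 :&: M2)%AS) = ('Gal(E / M1) * 'Gal(E / M2))%g.
  apply/eqP; rewrite eqEsubset gal_capv_sub ?gal_norm //=.
  by rewrite mul_subG // galS // ?capvSl ?capvSr.
have hm := mul_cardG 'Gal(E / M1) 'Gal(E / M2).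
have c1 := card_galE gE s1; have c2 := card_galE gE s2.
have cP := card_galE gE sP; have cC := card_galE gE sC.
rewrite eq1 in cP; rewrite eq2 in cC.
have pP : (0 < #|'Gal(E / M1) :&: 'Gal(E / M2)|)%N by rewrite -eq1 cardG_gt0.
have pC : (0 < #|('Gal(E / M1) * 'Gal(E / M2))%g|)%N by rewrite -eq2 cardG_gt0.
exact: (arith_lemma pP pC c1 c2 cP cC hm).
Qed.


Lemma chain_sub (Y M1 M2 : {subfield L}) p b : prime p -> galois 1 Y ->
  cyclic 'Gal(Y / 1) -> \dim Y = (p ^ b)%N -> (M1 <= Y)%VS -> (M2 <= Y)%VS ->
  (M1 <= M2)%VS \/ (M2 <= M1)%VS.
Proof.
move=> pr gY cY dY s1 s2.
have g1 : galois M1 Y by apply: galoisS gY; rewrite sub1v s1.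
have g2 : galois M2 Y by apply: galoisS gY; rewrite sub1v s2.
have sub1 := galS Y (sub1v M1); have sub2 := galS Y (sub1v M2).
have cG := card_gal1 gY.
have d1 : (#|'Gal(Y / M1)| %| p ^ b)%N by rewrite -dY -cG cardSg.
have d2 : (#|'Gal(Y / M2)| %| p ^ b)%N by rewrite -dY -cG cardSg.
case/(dvdn_pfactor _ _ pr): d1 => x _ e1.
case/(dvdn_pfactor _ _ pr): d2 => y _ e2.
have p1 : (1 < p)%N by apply: prime_gt1.
case: (leqP x y) => hxy.
  right; have : (#|'Gal(Y / M1)| %| #|'Gal(Y / M2)|)%N.
    by rewrite e1 e2 dvdn_Pexp2l.
  rewrite (cardSg_cyclic cY sub1 sub2) => /fixedFieldS.
  by rewrite (galois_fixedField g1) (galois_fixedField g2).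
left; have : (#|'Gal(Y / M2)| %| #|'Gal(Y / M1)|)%N.
  by rewrite e1 e2 dvdn_Pexp2l // ltnW.
rewrite (cardSg_cyclic cY sub2 sub1) => /fixedFieldS.
by rewrite (galois_fixedField g1) (galois_fixedField g2).
Qed.


Lemma exp_le (M1 M2 : {subfield L}) p x y : prime p -> (M1 <= M2)%VS ->
  \dim M1 = (p ^ x)%N -> \dim M2 = (p ^ y)%N -> (x <= y)%N.
Proof.
move=> pr s d1 d2; have := field_dimS s; rewrite d1 d2 dvdn_Pexp2l //.
exact: prime_gt1.
Qed.

Lemma exp_cancel p x y z : prime p -> (x * p ^ y = p ^ z)%N -> (y <= z)%N ->
  x = (p ^ (z - y))%N.
Proof.
move=> pr h hyz; have p0 : (0 < p ^ y)%N by rewrite expn_gt0 prime_gt0.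
apply/eqP; rewrite -(eqn_pmul2r p0) h -expnD subnK //.
Qed.

Lemma bound_lemma (E X Y R : {subfield L}) p a b e d h :
  prime p -> galois 1 E -> abelian 'Gal(E / 1) -> (X <= E)%VS -> (Y <= E)%VS ->
  (R <= (X * Y)%AS)%VS -> galois 1 Y -> cyclic 'Gal(Y / 1) ->
  \dim X = (p ^ a)%N -> \dim Y = (p ^ b)%N -> \dim (X :&: Y)%VS = (p ^ e)%N ->
  \dim R = (p ^ d)%N -> \dim (X :&: Y :&: R)%VS = (p ^ h)%N -> (d <= a)%N ->
  (d + e - h <= a)%N.
Proof.
move=> pr gE aG sX sY sR gY cY dX dY dC dR dF hda.
have p1 : (1 < p)%N by apply: prime_gt1.
have sXY : ((X * Y)%AS <= E)%VS by apply: prodv_sub.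
have sRE : (R <= E)%VS by apply: subv_trans sR sXY.
have hd : (h <= d)%N.
  by apply: (exp_le (M1 := ((X :&: Y) :&: R)%AS) (M2 := R) pr) => //; apply: capvSr.
have ea : (e <= a)%N.
  by apply: (exp_le (M1 := (X :&: Y)%AS) (M2 := X) pr) => //; apply: capvSl.
have sRY : ((R :&: Y)%AS <= Y)%VS by apply: capvSr.
have sXY' : ((X :&: Y)%AS <= Y)%VS by apply: capvSr.
case: (chain_sub pr gY cY dY sRY sXY') => hc.
  have eqF : ((X :&: Y) :&: R)%VS = (R :&: Y)%VS.
    apply/eqP; rewrite eqEsubv; apply/andP; split.
      rewrite subv_cap capvSr /=; apply: subv_trans (capvSl _ _) _; exact: capvSr.
    by rewrite subv_cap hc capvSl.
  rewrite eqF in dF.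
  have pRY := dim_prod_cap gE aG sRE sY.
  have pXY := dim_prod_cap gE aG sX sY.
  change (\dim (R :&: Y)%VS) with (\dim (R :&: Y)%AS) in dF.
  change (\dim (X :&: Y)%VS) with (\dim (X :&: Y)%AS) in dC.
  rewrite dF dR dY -expnD in pRY; rewrite dC dX dY -expnD in pXY.
  have eRY := exp_cancel pr pRY (leq_trans hd (leq_addr _ _)).
  have eXY := exp_cancel pr pXY (leq_trans ea (leq_addr _ _)).
  have sub : ((R * Y)%AS <= (X * Y)%AS)%VS by apply: prodv_sub => //; apply: field_subvMl.
  have := exp_le pr sub eRY eXY; clear -hd ea; lia.
have eqF : ((X :&: Y) :&: R)%VS = (X :&: Y)%VS.
  apply/capv_idPl; apply: subv_trans hc _; exact: capvSl.
rewrite eqF dC in dF; have := expnI p1 dF => ->; clear -hda; lia.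
Qed.


Lemma exists_sub (E X : {subfield L}) p a n : prime p -> galois 1 E ->
  (X <= E)%VS -> galois 1 X -> cyclic 'Gal(X / 1) -> \dim X = (p ^ a)%N ->
  (n <= a)%N ->
  exists A : {subfield L}, [/\ (A <= X)%VS, \dim A = (p ^ n)%N &
    forall x, x \in 'Gal(E / A) -> exists2 u, u \in 'Gal(E / X) &
      exists2 z, z \in 'Gal(E / 1) & x = u * z ^+ (p ^ n)].
Proof.
move=> pr gE sXE gX cX dX hna.
case/cyclicP: cX => s defC.
have os : #[s] = (p ^ a)%N by rewrite orderE -defC card_gal1.
set t := s ^+ (p ^ n).
have ot : #[t] = (p ^ (a - n))%N by apply: orderXexp.
exists (fixedField <[t]>%G); split.
- exact: fixedField_bound.
- have h1 := dim_fixedField <[t]>%G.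
  have h2 := dim_sup_field (fixedField_bound <[t]>).
  rewrite -h1 -orderE ot dX mulnC in h2.
  have := exp_cancel pr (esym h2) (leq_subr _ _).
  by rewrite subKn.
move=> x hx.
set A := fixedField <[t]>%G in hx.
have sAX : (A <= X)%VS by apply: fixedField_bound.
have sAE : (A <= E)%VS by apply: subv_trans sAX sXE.
have sKME : (1 <= X <= E)%VS by rewrite sub1v.
have nX : normalField 1 X by case/and3P: gX.
set f := normalField_cast_morphism sKME nX.
have Gx : x \in 'Gal(E / 1) by apply: (subsetP (galS E (sub1v A))).
have fxA : f x \in 'Gal(X / A).
  rewrite -sub1set galois_connection //.
  apply/subvP => c Ac; have Xc := subvP sAX c Ac.
  apply/fixedFieldP => // y /set1P ->.
  rewrite /f /= (normalField_cast_eq sKME nX Gx Xc).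
  exact: (fixed_gal sAE hx Ac).
rewrite /A gal_fixedField in fxA.
case/cycleP: fxA => l hl.
have : s \in f @* 'Gal(E / 1) by rewrite (normalField_img gE sKME nX) defC cycle_id.
case/morphimP => g Dg Gg hs.
exists (x * ((g ^+ l) ^+ (p ^ n))^-1); last first.
  by exists (g ^+ l); [apply: groupX | rewrite mulgKV].
rewrite -(normalField_ker sKME nX).
have Gz : (g ^+ l) ^+ (p ^ n) \in 'Gal(E / 1) by rewrite !groupX.
apply/(kerP f); first by rewrite groupM ?groupV.
rewrite morphM ?groupV // morphV // !morphX ?groupX //.
rewrite hl -hs /t -!expgM mulnC mulgV //.
Qed.


Lemma group_core (E Ki Kj R A B : {subfield L}) p d e h n :
  prime p -> galois 1 E -> abelian 'Gal(E / 1) ->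
  (Ki <= E)%VS -> (Kj <= E)%VS -> (E <= (Ki * Kj)%AS)%VS -> (R <= E)%VS ->
  \dim R = (p ^ d)%N -> \dim (Ki :&: Kj)%AS = (p ^ e)%N ->
  \dim ((Ki :&: Kj) :&: R)%AS = (p ^ h)%N -> (h <= d)%N -> (h <= e)%N ->
  n = (d + e - h)%N ->
  (forall x, x \in 'Gal(E / A) -> exists2 u, u \in 'Gal(E / Ki) &
      exists2 z, z \in 'Gal(E / 1) & x = u * z ^+ (p ^ n)) ->
  (forall x, x \in 'Gal(E / B) -> exists2 u, u \in 'Gal(E / Kj) &
      exists2 z, z \in 'Gal(E / 1) & x = u * z ^+ (p ^ n)) ->
  'Gal(E / (A * B)%AS) \subset 'Gal(E / R).
Proof.
move=> pr gE aG sKi sKj sEK sR dR dC dF hd he hn PA PB.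
have p1 : (1 < p)%N by apply: prime_gt1.
have cG : {in 'Gal(E / 1) &, forall x y, commute x y}.
  by move=> x y Gx Gy; apply: (centsP aG).
have subG : forall M : {subfield L}, 'Gal(E / M) \subset 'Gal(E / 1).
  by move=> M; apply: galS; apply: sub1v.
have sC : ((Ki :&: Kj)%AS <= E)%VS by apply: subv_trans (capvSl _ _) sKi.
set F := ((Ki :&: Kj) :&: R)%AS.
have sFR : (F <= R)%VS by apply: capvSr.
have powS : forall z, z \in 'Gal(E / 1) -> z ^+ (p ^ d) \in 'Gal(E / R).
  move=> z Gz; have := pow_index (subG R) (sub_abelian_norm aG (subG R)) Gz.
  have := index_galE gE (sub1v R) sR; rewrite dimv1 muln1 dR => -> //.
have powC : forall z, z \in 'Gal(E / 1) ->
    z ^+ (p ^ e) \in ('Gal(E / Ki) * 'Gal(E / Kj))%g.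
  move=> z Gz; apply: (subsetP (gal_capv_sub gE sKi sKj (gal_norm _ _ aG))).
  have := pow_index (subG _) (sub_abelian_norm aG (subG (Ki :&: Kj)%AS)) Gz.
  have := index_galE gE (sub1v (Ki :&: Kj)%AS) sC; rewrite dimv1 muln1 dC => -> //.
have powF : forall w, w \in 'Gal(E / Ki) -> w ^+ (p ^ (d - h)) \in 'Gal(E / R).
  move=> w Hw.
  have sSF : 'Gal(E / R) \subset 'Gal(E / F) by apply: galS.
  have nSF : 'Gal(E / F) \subset 'N('Gal(E / R)).
    by apply: subset_trans (subG F) (sub_abelian_norm aG (subG R)).
  have Fw : w \in 'Gal(E / F).
    apply: (subsetP (galS E _)) Hw; apply: subv_trans (capvSl _ _) _; exact: capvSl.
  have := pow_index sSF nSF Fw.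
  have := index_galE gE sFR sR; rewrite dR dF => hi.
  by rewrite (exp_cancel pr hi hd).
have triv : forall y, y \in 'Gal(E / Ki) -> y \in 'Gal(E / Kj) -> y = 1.
  move=> y y1 y2; apply: (gal_EE (E := E)).
  apply: (subsetP (galS E sEK)); apply: (subsetP (gal_cap_sub sKi sKj)).
  by rewrite inE y1 y2.
apply/subsetP => x hx.
have hxA : x \in 'Gal(E / A) by apply: (subsetP (galS E (field_subvMr A B))).
have hxB : x \in 'Gal(E / B) by apply: (subsetP (galS E (field_subvMl A B))).
have [u hu [z1 hz1 ex1]] := PA x hxA.
have [v hv [z2 hz2 ex2]] := PB x hxB.
have Gu := subsetP (subG Ki) u hu; have Gv := subsetP (subG Kj) v hv.
have hdn : (d <= n)%N by rewrite hn; clear -he; lia.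
have hen : (e <= n)%N by rewrite hn; clear -hd; lia.
have hq : (n - e = d - h)%N by rewrite hn; clear -hd he; lia.
rewrite ex1; apply: groupM; last first.
  by rewrite -(subnKC hdn) expnD expgM groupX // powS.
set z := z2 * z1^-1.
have Gz : z \in 'Gal(E / 1) by rewrite groupM ?groupV.
have eu : u = v * z ^+ (p ^ n).
  rewrite /z expgMn; last by apply: cG; rewrite ?groupV.
  by rewrite expVgn mulgA -ex2 ex1 mulgK.
have := powC z Gz; case/mulsgP => w v' hw hv' ez.
have Gw := subsetP (subG Ki) w hw; have Gv' := subsetP (subG Kj) v' hv'.
set q := (p ^ (n - e))%N.
have ezn : z ^+ (p ^ n) = w ^+ q * v' ^+ q.
  by rewrite -(subnKC hen) expnD expgM ez expgMn //; apply: cG.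
have Gwq : w ^+ q \in 'Gal(E / 1) by apply: groupX.
have eu2 : u = w ^+ q * (v * v' ^+ q).
  by rewrite eu ezn mulgA (cG v (w ^+ q) Gv Gwq) -mulgA.
have key : (w ^+ q)^-1 * u = 1.
  apply: triv.
    by rewrite groupM ?groupV ?groupX.
  by rewrite eu2 mulKg groupM ?groupX.
have -> : u = w ^+ q.
  by apply/esym/eqP; rewrite eq_mulVg1; apply/eqP.
by rewrite /q hq powF.
Qed.

End Gal.

Local Close Scope group_scope.
Unset Implicit Arguments.

Theorem lemma4p3 (k : fieldType) (L : splittingFieldType k)
  (p m : nat) (K : 'I_m.+1 -> {subfield L}) (eps : 'I_m.+1 -> nat)
  (e : 'I_m.+1 -> 'I_m.+1 -> nat)
  (i j : 'I_m.+1) (R : {subfield L}) (d h : nat) :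
  is_global_field k ->
  prime p -> (2 <= m)%N ->
  (forall l, cyclic_ext (K l)) ->
  (forall l, \dim (K l) = (p ^ eps l)%N) ->
  (forall l, (eps ord0 <= eps l)%N) ->
  (\bigcap_(l < m.+1) (K l : {vspace L}))%VS = 1%VS ->
  (forall l l', l != l' -> ~~ (K l' <= K l)%VS) ->
  (forall l l', \dim (K l :&: K l')%VS = (p ^ e l l')%N) ->
  i != j ->
  cyclic_ext R -> \dim R = (p ^ d)%N ->
  \dim (K i :&: K j :&: R)%VS = (p ^ h)%N ->
  (R <= (K i * K j)%AS)%VS ->
  (d <= minn (eps i) (eps j))%N ->
  (d + e i j - h <= minn (eps i) (eps j))%N /\
  exists A B : {subfield L},
    [/\ (A <= K i)%VS, \dim A = (p ^ (d + e i j - h))%N,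
        (B <= K j)%VS, \dim B = (p ^ (d + e i j - h))%N
      & (R <= (A * B)%AS)%VS].
Proof.
move=> _ pr _ cycK dimK _ _ _ dimKK _ cycR dimR dimF RE dmin.
have [gKi cKi] := andP (cycK i); have [gKj cKj] := andP (cycK j).
have [gR _] := andP cycR.
set E := (K i * K j)%AS.
have gE : galois 1 E by apply: galois_prod.
have aG : abelian 'Gal(E / 1)%g.
  by apply: gal_abelian => //; apply: cyclic_abelian.
have sKiE : (K i <= E)%VS by apply: field_subvMr.
have sKjE : (K j <= E)%VS by apply: field_subvMl.
have p1 : (1 < p)%N by apply: prime_gt1.
rewrite leq_min in dmin; case/andP: dmin => hdi hdj.
have hni : (d + e i j - h <= eps i)%N.
  exact: (bound_lemma pr gE aG sKiE sKjE RE gKj cKj (dimK i) (dimK j) (dimKK i j) dimR dimF hdi).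
have hnj : (d + e i j - h <= eps j)%N.
  have RE' : (R <= (K j * K i)%AS)%VS by rewrite /= prodvC.
  have dC : \dim (K j :&: K i)%VS = (p ^ e i j)%N by rewrite capvC dimKK.
  have dF : \dim (K j :&: K i :&: R)%VS = (p ^ h)%N by rewrite (capvC (K j)) dimF.
  exact: (bound_lemma pr gE aG sKjE sKiE RE' gKi cKi (dimK j) (dimK i) dC dimR dF hdj).
split; first by rewrite leq_min hni hnj.
set n := (d + e i j - h)%N in hni hnj *.
have [A [sA dA PA]] := exists_sub pr gE sKiE gKi cKi (dimK i) hni.
have [B [sB dB PB]] := exists_sub pr gE sKjE gKj cKj (dimK j) hnj.
exists A, B; split => //.
set F := ((K i :&: K j) :&: R)%AS.
have dF : \dim F = (p ^ h)%N := dimF.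
have dC : \dim (K i :&: K j)%AS = (p ^ e i j)%N := dimKK i j.
have sRE : (R <= E)%VS by [].
have hd : (h <= d)%N by apply: (exp_le pr _ dF dimR); apply: capvSr.
have he : (h <= e i j)%N by apply: (exp_le pr _ dF dC); apply: capvSl.
have sAB : ((A * B)%AS <= E)%VS.
  by apply: prodv_sub; [apply: subv_trans sA sKiE | apply: subv_trans sB sKjE].
have gABE : galois (A * B)%AS E by apply: galoisS gE; rewrite sub1v sAB.
suff : ('Gal(E / (A * B)%AS) \subset 'Gal(E / R))%g.
  by rewrite galois_connection // (galois_fixedField gABE).
exact: (group_core pr gE aG sKiE sKjE (subvv E) sRE dimR dC dF hd he (erefl n) PA PB).
Qed.
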